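(* In the manifold decomposition game, the Grundy value of the position consisting of the single surface $ng$ is $G(n0)=0$, $G(n1)=1$, $G(n2)=2$, and for $g\ge 3$: $G(ng)=4$ if $g\equiv 3 \pmod 4$, $G(ng)=6$ if $g\equiv 0\pmod 4$, $G(ng)=0$ if $g\equiv 1\pmod 4$, and $G(ng)=3$ if $g\equiv 2\pmod 4$. (In the paper's notation, the $G$-series of $ng$ is $012\dot{4}60\dot{3}$.)
   Context: Notation: $ng$ is the closed nonorientable surface of genus $g$ (connected sum of $g$ projective planes), $og$ the closed orientable surface of genus $g$, and $n0=o0$ is the sphere. The manifold decomposition game: a position is a finite disjoint union of compact connected surfaces without boundary. Two players alternate moves. A move consists of choosing one component $S$ and performing a proper decomposition of it: choose an essential simple closed curve $J$ on $S$ (not null-homotopic, equivalently not bounding a disk in $S$), take a tubular neighborhood of $J$ (an annulus or a Möbius band), remove its interior, and cap off each resulting boundary circle with a disk; $S$ is replaced by the resulting one or two surfaces. The game ends when every component is a sphere, and the last player able to move wins. The Grundy value $G$ of a position is defined recursively: a position with no moves has value $0$, and otherwise the value is the minimal excluded nonnegative integer (mex) of the values of positions reachable in one move. The $G$-series lists $G(n0),G(n1),G(n2),\dots$; dots over digits indicate a repeating block. *)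

(* Defs.v *)
From Stdlib Require Import List Permutation.
From mathcomp Require Import all_boot.

Set Implicit Arguments.
Unset Strict Implicit.
Unset Printing Implicit Defensive.

(* Closed connected surfaces up to homeomorphism (classification theorem):
   [Orient g]    is the orientable surface o_g (Orient 0 is the sphere),
   [NonOrient k] is the nonorientable surface n_(k+1). *)
Inductive surface : Type :=
| Orient of nat
| NonOrient of nat.

Definition ns (g : nat) : surface :=
  match g with 0 => Orient 0 | k.+1 => NonOrient k end.

(* [decomp S R]: R (list of one or two surfaces) is obtainable from S by a
   proper decomposition along an essential simple closed curve J:
   cut along J (annulus or Moebius band neighbourhood) and cap boundary
   circles with disks.  The cases are the possible topological types of
   (J, S), enumerated via the classification of surfaces. *)
Inductive decomp : surface -> seq surface -> Prop :=
(* o_g, J two-sided non-separating: o_(g-1) *)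
| dec_o_nonsep g : decomp (Orient g.+1) [:: Orient g]
(* o_g, J separating (essential): o_a + o_b, a,b >= 1 *)
| dec_o_sep a b : decomp (Orient (a.+1 + b.+1)) [:: Orient a.+1; Orient b.+1]
(* n_h, J one-sided, nonorientable (or sphere) complement: n_(h-1) *)
| dec_n_one_n h : 0 < h -> decomp (ns h) [:: ns h.-1]
(* n_(2b+1), J one-sided, orientable complement: o_b *)
| dec_n_one_o b : decomp (ns (2 * b).+1) [:: Orient b]
(* n_h, J two-sided non-separating, nonorientable complement: n_(h-2) *)
| dec_n_two_n h : 3 <= h -> decomp (ns h) [:: ns (h - 2)]
(* n_(2b+2), J two-sided non-separating, orientable complement: o_b *)
| dec_n_two_o b : decomp (ns (2 * b).+2) [:: Orient b]
(* n_(a+b), J separating into two nonorientable pieces *)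
| dec_n_sep_nn a b : 0 < a -> 0 < b -> decomp (ns (a + b)) [:: ns a; ns b]
(* n_(a+2b), J separating into a nonorientable and an orientable piece *)
| dec_n_sep_no a b : 0 < a -> 0 < b ->
    decomp (ns (a + 2 * b)) [:: ns a; Orient b].

(* A position: finite disjoint union of surfaces (a multiset, order irrelevant). *)
Definition position := seq surface.

Definition move (P Q : position) : Prop :=
  exists (S : surface) (R rest : seq surface),
    Permutation P (S :: rest) /\ decomp S R /\ Permutation Q (R ++ rest).

(* G is a Grundy function: G P = mex { G Q | move P Q } for every position P. *)
Definition is_grundy (G : position -> nat) : Prop :=
  forall P : position,
    (forall Q, move P Q -> G Q <> G P) /\
    (forall m, m < G P -> exists Q, move P Q /\ G Q = m).

(* Main.v *)
Require Import Defs.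
From Stdlib Require Import List Permutation PeanoNat.
From mathcomp Require Import all_boot zify.

Ltac split_ifs := repeat match goal with |- context [if ?c then _ else _] =>
  lazymatch c with context [if _ then _ else _] => fail | _ => let E := fresh "E" in case E: c => /= end end.

Definition rn h := if h < 3 then h else 3 + (h - 3) %% 4.
Definition ro g := if g < 2 then g else 2 + g %% 2.
Definition gn h := nth 0 [:: 0; 1; 2; 4; 6; 0; 3] (rn h).
Definition go g := nth 0 [:: 0; 1; 2; 0] (ro g).
Definition gs (S : surface) := match S with Orient g => go g | NonOrient k => gn k.+1 end.
Definition Gc (L : seq surface) := foldr (fun S acc => Nat.lxor (gs S) acc) 0 L.

Lemma rn_add x y : rn (x + y) = rn (rn x + rn y).
Proof. rewrite /rn; split_ifs; lia. Qed.
Lemma rn_add2 x y : rn (x + 2 * y) = rn (rn x + 2 * ro y).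
Proof. rewrite /rn /ro; split_ifs; lia. Qed.
Lemma ro_add x y : ro (x + y) = ro (ro x + ro y).
Proof. rewrite /ro; split_ifs; lia. Qed.
Lemma rn_id x : rn (rn x) = rn x.
Proof. rewrite /rn; split_ifs; lia. Qed.
Lemma ro_id x : ro (ro x) = ro x.
Proof. rewrite /ro; split_ifs; lia. Qed.
Lemma rn_lt x : rn x < 7. Proof. rewrite /rn; split_ifs; lia. Qed.
Lemma ro_lt x : ro x < 4. Proof. rewrite /ro; split_ifs; lia. Qed.
Lemma rn_pos x : 0 < x -> 0 < rn x. Proof. rewrite /rn; split_ifs; lia. Qed.
Lemma ro_pos x : 0 < x -> 0 < ro x. Proof. rewrite /ro; split_ifs; lia. Qed.
Lemma gn_per q c : 3 <= c -> gn (4 * q + c) = gn c.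
Proof. move=> h; rewrite /gn /rn; congr nth; split_ifs; lia. Qed.
Lemma go_per q c : 2 <= c -> go (2 * q + c) = go c.
Proof. move=> h; rewrite /go /ro; congr nth; split_ifs; lia. Qed.
Lemma gn_red x y : gn (x + y) = gn (rn x + rn y).
Proof. by rewrite /gn rn_add. Qed.
Lemma gn_red2 x y : gn (x + 2 * y) = gn (rn x + 2 * ro y).
Proof. by rewrite /gn rn_add2. Qed.
Lemma go_red x y : go (x + y) = go (ro x + ro y).
Proof. by rewrite /go ro_add. Qed.
Lemma gn_id x : gn x = gn (rn x). Proof. by rewrite /gn rn_id. Qed.
Lemma go_id x : go x = go (ro x). Proof. by rewrite /go ro_id. Qed.
Lemma gs_ns h : gs (ns h) = gn h. Proof. by case: h. Qed.
Lemma gs_O g : gs (Orient g) = go g. Proof. by []. Qed.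
Lemma Gc1 x : Gc [:: x] = gs x. Proof. by rewrite /= Nat.lxor_0_r. Qed.
Lemma Gc2 x y : Gc [:: x; y] = Nat.lxor (gs x) (gs y). Proof. by rewrite /= Nat.lxor_0_r. Qed.

Lemma fin1 n (p : pred nat) x : all p (iota 0 n) -> x < n -> p x.
Proof. by move/allP => H Hx; apply: H; rewrite mem_iota. Qed.
Lemma fin2 n1 n2 (p : nat -> nat -> bool) x y :
  all (fun x => all (p x) (iota 0 n2)) (iota 0 n1) -> x < n1 -> y < n2 -> p x y.
Proof.
move/allP => H Hx Hy; have := H x; rewrite mem_iota => /(_ Hx)/allP; apply.
by rewrite mem_iota.
Qed.

Lemma A_surf S R : decomp S R -> Gc R <> gs S.
Proof.
case => [g|a b|h Hh|b|h Hh|b|a b Ha Hb|a b Ha Hb];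
  rewrite ?Gc1 ?Gc2 ?gs_ns ?gs_O.
- rewrite -addn1 go_red [go g]go_id; apply/eqP.
  apply: (fin1 4 (fun x => go x != go (x + ro 1)) (ro g) _ (ro_lt g)); by vm_compute.
- rewrite go_red [go a.+1]go_id [go b.+1]go_id.
  have := ro_pos _ (ltn0Sn a); have := ro_pos _ (ltn0Sn b).
  move: (ro_lt a.+1) (ro_lt b.+1); move: (ro a.+1) (ro b.+1) => x y Hx Hy Py Px.
  have := fin2 4 4 (fun x y => (0 < x) ==> (0 < y) ==> (Nat.lxor (go x) (go y) != go (x + y))) x y.
  rewrite Px Py /= => H; apply/eqP; apply: H => //; by vm_compute.
- case: h Hh => // k _ /=; rewrite -addn1 gn_red [gn k]gn_id; apply/eqP.
  apply: (fin1 7 (fun x => gn x != gn (x + rn 1)) (rn k) _ (rn_lt k)); by vm_compute.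
- rewrite -add1n gn_red2 [go b]go_id; apply/eqP.
  apply: (fin1 4 (fun x => go x != gn (rn 1 + 2 * x)) (ro b) _ (ro_lt b)); by vm_compute.
- case: h Hh => [|[|[|k]]] // _.
  rewrite (_ : k.+3 - 2 = k + 1); last by lia.
  rewrite (_ : k.+3 = k + 3); last by lia.
  rewrite [gn (k + 1)]gn_red [gn (k + 3)]gn_red; apply/eqP.
  apply: (fin1 7 (fun x => gn (x + rn 1) != gn (x + rn 3)) (rn k) _ (rn_lt k)); by vm_compute.
- rewrite -add2n gn_red2 [go b]go_id; apply/eqP.
  apply: (fin1 4 (fun x => go x != gn (rn 2 + 2 * x)) (ro b) _ (ro_lt b)); by vm_compute.
- rewrite gn_red [gn a]gn_id [gn b]gn_id.
  have := rn_pos _ Ha; have := rn_pos _ Hb.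
  move: (rn_lt a) (rn_lt b); move: (rn a) (rn b) => x y Hx Hy Py Px.
  have := fin2 7 7 (fun x y => (0 < x) ==> (0 < y) ==> (Nat.lxor (gn x) (gn y) != gn (x + y))) x y.
  rewrite Px Py /= => H; apply/eqP; apply: H => //; by vm_compute.
- rewrite gn_red2 [gn a]gn_id [go b]go_id.
  have := rn_pos _ Ha; have := ro_pos _ Hb.
  move: (rn_lt a) (ro_lt b); move: (rn a) (ro b) => x y Hx Hy Py Px.
  have := fin2 7 4 (fun x y => (0 < x) ==> (0 < y) ==> (Nat.lxor (gn x) (go y) != gn (x + 2 * y))) x y.
  rewrite Px Py /= => H; apply/eqP; apply: H => //; by vm_compute.
Qed.

Lemma d_one_n x y : x = y.+1 -> decomp (ns x) [:: ns y].
Proof. move=> ->; exact: (dec_n_one_n (ltn0Sn y)). Qed.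
Lemma d_two_n x y : x = y.+2 -> 1 <= y -> decomp (ns x) [:: ns y].
Proof. move=> -> Hy; have := @dec_n_two_n y.+2; rewrite subSS subSS subn0; apply; lia. Qed.
Lemma d_nn x a b : x = a + b -> 0 < a -> 0 < b -> decomp (ns x) [:: ns a; ns b].
Proof. move=> ->; exact: dec_n_sep_nn. Qed.
Lemma d_no x a b : x = a + 2 * b -> 0 < a -> 0 < b -> decomp (ns x) [:: ns a; Orient b].
Proof. move=> ->; exact: dec_n_sep_no. Qed.
Lemma d_one_o x b : x = (2 * b).+1 -> decomp (ns x) [:: Orient b].
Proof. move=> ->; exact: dec_n_one_o. Qed.
Lemma d_two_o x b : x = (2 * b).+2 -> decomp (ns x) [:: Orient b].
Proof. move=> ->; exact: dec_n_two_o. Qed.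
Lemma d_o_nonsep x y : x = y.+1 -> decomp (Orient x) [:: Orient y].
Proof. move=> ->; exact: dec_o_nonsep. Qed.
Lemma d_o_sep x a b : x = a + b -> 0 < a -> 0 < b -> decomp (Orient x) [:: Orient a; Orient b].
Proof. move=> -> Ha Hb; case: a Ha => // a _; case: b Hb => // b _; exact: dec_o_sep. Qed.

Ltac dec_tac := first [ apply: d_one_n; lia | apply: d_two_n; lia | apply: d_nn; lia
  | apply: d_no; lia | apply: d_one_o; lia | apply: d_two_o; lia
  | apply: d_o_nonsep; lia | apply: d_o_sep; lia ].
Ltac val_tac := rewrite ?Gc1 ?Gc2 ?gs_ns ?gs_O ?gn_per ?go_per //.
Ltac wit R := exists R; split; [dec_tac | val_tac].

Lemma B_n h t : t < gn h -> exists R, decomp (ns h) R /\ Gc R = t.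
Proof.
move=> Ht; have [Hs|Hl] := leqP h 6.
  move: Ht; case: h Hs => [|[|[|[|[|[|[|h]]]]]]] // _.

  - have ->: gn 1 = 1 by [].
    case: t => [|t] // _.
    + wit ([:: ns 0]).
  - have ->: gn 2 = 2 by [].
    case: t => [|[|t]] // _.
    + wit ([:: Orient 0]).
    + wit ([:: ns 1]).
  - have ->: gn 3 = 4 by [].
    case: t => [|[|[|[|t]]]] // _.
    + wit ([:: ns 1; Orient 1]).
    + wit ([:: ns 1]).
    + wit ([:: ns 2]).
    + wit ([:: ns 1; ns 2]).
  - have ->: gn 4 = 6 by [].
    case: t => [|[|[|[|[|[|t]]]]]] // _.
    + wit ([:: ns 2; ns 2]).
    + wit ([:: Orient 1]).
    + wit ([:: ns 2]).
    + wit ([:: ns 2; Orient 1]).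
    + wit ([:: ns 3]).
    + wit ([:: ns 1; ns 3]).
  - have ->: gn 6 = 3 by [].
    case: t => [|[|[|t]]] // _.
    + wit ([:: ns 5]).
    + wit ([:: ns 1; ns 5]).
    + wit ([:: Orient 2]).
have Eh : h = 4 * ((h - 7) %/ 4) + ((h - 7) %% 4 + 7) by lia.
have Hr : (h - 7) %% 4 < 4 by rewrite ltn_mod.
move: Eh Hr Ht; move: ((h - 7) %/ 4) ((h - 7) %% 4) => q r -> Hr.
case: r Hr => [|[|[|[|r]]]] // _ /=; rewrite gn_per //.
- have ->: gn 7 = 4 by [].
  case: t => [|[|[|[|t]]]] // _.
  + wit ([:: ns (4 * q + 5)]).
  + wit ([:: ns (4 * q + 5); Orient 1]).
  + wit ([:: ns 1; ns (4 * q + 6)]).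
  + wit ([:: ns (4 * q + 6)]).
- have ->: gn 8 = 6 by [].
  case: t => [|[|[|[|[|[|t]]]]]] // _.
  + wit ([:: ns 4; ns (4 * q + 4)]).
  + wit ([:: ns 2; ns (4 * q + 6)]).
  + wit ([:: ns (4 * q + 6); Orient 1]).
  + wit ([:: ns (4 * q + 6)]).
  + wit ([:: ns (4 * q + 7)]).
  + wit ([:: ns 1; ns (4 * q + 7)]).
- have ->: gn 10 = 3 by [].
  case: t => [|[|[|t]]] // _.
  + wit ([:: ns (4 * q + 9)]).
  + wit ([:: ns 1; ns (4 * q + 9)]).
  + wit ([:: Orient (2 * q + 4)]).
Qed.

Lemma B_o g t : t < go g -> exists R, decomp (Orient g) R /\ Gc R = t.
Proof.
move=> Ht; have [Hs|Hl] := leqP g 3.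
  move: Ht; case: g Hs => [|[|[|[|g]]]] // _.
  - have ->: go 1 = 1 by []. case: t => [|t] // _.
    wit ([:: Orient 0]).
  - have ->: go 2 = 2 by []. case: t => [|[|t]] // _.
    + wit ([:: Orient 1; Orient 1]).
    + wit ([:: Orient 1]).
have Eh : g = 2 * ((g - 4) %/ 2) + ((g - 4) %% 2 + 4) by lia.
have Hr : (g - 4) %% 2 < 2 by rewrite ltn_mod.
move: Eh Hr Ht; move: ((g - 4) %/ 2) ((g - 4) %% 2) => q r -> Hr.
case: r Hr => [|[|r]] // _ /=; rewrite go_per //.
- have ->: go 4 = 2 by []. case: t => [|[|t]] // _.
  + wit ([:: Orient (2 * q + 3)]).
  + wit ([:: Orient 1; Orient (2 * q + 3)]).
Qed.
Set Implicit Arguments. Unset Strict Implicit.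

Lemma B_surf S t : t < gs S -> exists R, decomp S R /\ Gc R = t.
Proof. case: S => [g|k]; [exact: B_o | exact: (B_n k.+1)]. Qed.

Lemma Gc_cat A B : Gc (A ++ B) = Nat.lxor (Gc A) (Gc B).
Proof. elim: A => [|x A IH] /=; first by rewrite Nat.lxor_0_l. by rewrite IH Nat.lxor_assoc. Qed.

Lemma Gc_perm A B : Permutation A B -> Gc A = Gc B.
Proof.
elim => [|x l l' _ IH|x y l|l l' l'' _ IH1 _ IH2] /=; try congruence.
by rewrite -!Nat.lxor_assoc (Nat.lxor_comm (gs y)).
Qed.

Lemma gs_lt8 S : gs S < 8.
Proof.
case: S => [g|k] /=.
- rewrite /go; apply: (fin1 4 (fun i => nth 0 [:: 0; 1; 2; 0] i < 8) _ _ (ro_lt g)); by vm_compute.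
- rewrite /gn; apply: (fin1 7 (fun i => nth 0 [:: 0; 1; 2; 4; 6; 0; 3] i < 8) _ _ (rn_lt _)); by vm_compute.
Qed.

Lemma lxor_lt8 x y : x < 8 -> y < 8 -> Nat.lxor x y < 8.
Proof. move=> Hx Hy; apply: (fin2 8 8 (fun x y => Nat.lxor x y < 8) x y _ Hx Hy); by vm_compute. Qed.

Lemma Gc_lt8 L : Gc L < 8.
Proof. elim: L => [|x L IH] //=; exact: lxor_lt8 (gs_lt8 x) IH. Qed.

Lemma key c x m : c < 8 -> x < 8 -> m < Nat.lxor c x ->
  Nat.lxor x m < c \/ Nat.lxor c m < x.
Proof.
move=> Hc Hx Hm.
have Hm8 : m < 8 by have := lxor_lt8 Hc Hx; lia.
have := fin2 8 8 (fun c x => all (fun m => (m < Nat.lxor c x) ==>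
   ((Nat.lxor x m < c) || (Nat.lxor c m < x))) (iota 0 8)) c x.
move=> /(_ _ Hc Hx) H.
have {H} /allP H : all (fun m => (m < Nat.lxor c x) ==>
   ((Nat.lxor x m < c) || (Nat.lxor c m < x))) (iota 0 8) by apply: H; vm_compute.
by have := H m; rewrite mem_iota /= => /(_ Hm8); rewrite Hm /= => /orP.
Qed.

Lemma SG_split L m : m < Gc L ->
  exists S rest, Permutation L (S :: rest) /\ Nat.lxor (Gc rest) m < gs S.
Proof.
elim: L m => [|c L IH] m //= Hm.
case: (key (gs_lt8 c) (Gc_lt8 L) Hm) => H.
- by exists c, L; split.
- have [S [rest [HP HS]]] := IH _ H.
  exists S, (c :: rest); split.
  + apply: Permutation_trans (perm_skip c HP) _; exact: perm_swap.
  + by rewrite /= (Nat.lxor_comm (gs c)) Nat.lxor_assoc.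
Qed.

Lemma Gc_grundy : is_grundy Gc.
Proof.
move=> P; split.
- move=> Q [S [R [rest [HP [HD HQ]]]]].
  rewrite (Gc_perm HP) (Gc_perm HQ) Gc_cat /= => E.
  apply: (A_surf _ _ HD).
  have := congr1 (fun u => Nat.lxor u (Gc rest)) E.
  by rewrite !Nat.lxor_assoc !Nat.lxor_nilpotent !Nat.lxor_0_r.
- move=> m Hm.
  have [S [rest [HP HS]]] := SG_split Hm.
  have [R [HD HR]] := B_surf HS.
  exists (R ++ rest); split.
  + exists S, R, rest; split => //; split => //; exact: Permutation_refl.
  + rewrite Gc_cat HR (Nat.lxor_comm (Gc rest)) Nat.lxor_assoc Nat.lxor_nilpotent.
    by rewrite Nat.lxor_0_r.
Qed.

Definition cw (S : surface) := match S with Orient g => 2 * g | NonOrient k => k.+1 end.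
Definition w (L : seq surface) := foldr (fun S acc => cw S * cw S + acc) 0 L.

Lemma w_cat A B : w (A ++ B) = w A + w B.
Proof. elim: A => [|x A IH] //=; rewrite IH; lia. Qed.

Lemma w_perm A B : Permutation A B -> w A = w B.
Proof. elim => [|x l l' _ IH|x y l|l l' l'' _ IH1 _ IH2] /=; lia. Qed.

Lemma cw_ns h : cw (ns h) = h. Proof. by case: h. Qed.

Lemma w_dec S R : decomp S R -> w R < cw S * cw S.
Proof.
case => [g|a b|h Hh|b|h Hh|b|a b Ha Hb|a b Ha Hb] /=; rewrite ?cw_ns /=; try nia.
Qed.

Lemma move_w P Q : move P Q -> w Q < w P.
Proof.
move=> [S [R [rest [HP [HD HQ]]]]].
rewrite (w_perm HP) (w_perm HQ) w_cat /=; have := w_dec HD; lia.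
Qed.

Lemma uniqG G : is_grundy G -> forall P, G P = Gc P.
Proof.
move=> HG.
suff H : forall n P, w P < n -> G P = Gc P by move=> P; apply: (H (w P).+1).
elim => [|n IH] P // HP.
have [HG1 HG2] := HG P; have [HC1 HC2] := Gc_grundy P.
case: (ltngtP (G P) (Gc P)) => // Hlt.
- have [Q [HM HQ]] := HC2 _ Hlt.
  have := IH Q; rewrite HQ => E. exfalso; apply: (HG1 Q HM).
  rewrite E //; have := move_w HM; lia.
- have [Q [HM HQ]] := HG2 _ Hlt.
  exfalso; apply: (HC1 Q HM).
  rewrite -IH //; have := move_w HM; lia.
Qed.

Theorem theorem2p4 :
  (exists G : position -> nat, is_grundy G) /\
  (forall G : position -> nat, is_grundy G ->
     G [:: ns 0] = 0 /\ G [:: ns 1] = 1 /\ G [:: ns 2] = 2 /\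
     (forall g : nat, 3 <= g ->
        G [:: ns g] =
          (if g %% 4 == 3 then 4
           else if g %% 4 == 0 then 6
           else if g %% 4 == 1 then 0
           else 3))).
Proof.
split; first by exists Gc; exact: Gc_grundy.
move=> G HG; rewrite !(uniqG HG) !Gc1 !gs_ns.
split; first by []. split; first by []. split; first by [].
move=> g Hg; rewrite (uniqG HG) Gc1 gs_ns /gn /rn.
have -> : (g < 3) = false by apply/negbTE; rewrite -leqNgt.
have Hr : g %% 4 < 4 by rewrite ltn_mod.
case E: (g %% 4) Hr => [|[|[|[|r]]]] // _ /=.
- by rewrite (_ : (g - 3) %% 4 = 1) //; lia.
- by rewrite (_ : (g - 3) %% 4 = 2) //; lia.
- by rewrite (_ : (g - 3) %% 4 = 3) //; lia.
- by rewrite (_ : (g - 3) %% 4 = 0) //; lia.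
Qed.
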